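(* Let $m,n$ be positive integers. Then $S_{mn+1}\equiv4(mn+1)S_{mn}\pmod{m^2n^2}$.
   Context: $(S_n)_{n\ge0}$ is the integer sequence defined by $S_0=1$, $S_1=4$ and $(n+1)^2S_{n+1}=4(3n^2+3n+1)S_n-32n^2S_{n-1}$ for $n\ge1$; equivalently $S_n=\sum_{k=0}^n\binom nk\binom{2k}k\binom{2n-2k}{n-k}$. *)

(* Defs.v *)
From mathcomp Require Import all_boot.
Set Implicit Arguments. Unset Strict Implicit. Unset Printing Implicit Defensive.

Definition S (n : nat) : nat :=
  \sum_(0 <= k < n.+1) 'C(n, k) * 'C(k.*2, k) * 'C((n - k).*2, n - k).

Lemma S_small : [:: S 0; S 1; S 2; S 3] = [:: 1; 4; 20; 112].
Proof. by rewrite /S !big_nat_recr /= ?big_nil. Qed.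

(* Main.v *)
Require Import Defs.
From mathcomp Require Import all_boot all_algebra.
From mathcomp Require Import zify ring lra.
Import GRing.Theory Num.Theory.
Definition Fn n k := 'C(n, k) * 'C(k.*2, k) * 'C((n - k).*2, n - k).

Lemma cen m : 'C(m.+1.*2, m.+1) * m.+1 = 2 * (m.*2.+1) * 'C(m.*2, m).
Proof.
have h1 := mul_bin_diag (m.+1.*2) m.
have h2 := mul_bin_down (m.*2.+1) m.
rewrite doubleS /= in h1.
have e : m.*2.+1 - m = m.+1 by lia.
rewrite e /= in h2.
apply/eqP; rewrite -(eqn_pmul2l (ltn0Sn m)); apply/eqP.
rewrite doubleS.
nia.
Qed.

Lemma R1 k m : (m.+1)^2 * Fn (k+m).+1 k = 2 * (k+m).+1 * (m.*2.+1) * Fn (k+m) k.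
Proof.
rewrite /Fn.
have e1 : (k+m).+1 - k = m.+1 by lia.
have e2 : (k+m) - k = m by lia.
rewrite e1 e2.
have h := mul_bin_down (k+m).+1 k. rewrite /= e1 in h.
have c := cen m.
set C' := 'C(_.+1, k) in h *. set a' := 'C(m.+1.*2, _) in c *.
rewrite -(mulnn m.+1).
have -> : m.+1 * m.+1 * (C' * 'C(k.*2, k) * a') = (m.+1 * C') * (a' * m.+1) * 'C(k.*2, k) by ring.
rewrite -h c; ring.
Qed.

Lemma R3 j m : (m.*2.+1) * (j.+1)^2 * Fn (j.+1+m) j.+1 = (m.+1)^2 * (j.*2.+1) * Fn (j.+1+m) j.
Proof.
rewrite /Fn.
have e1 : (j.+1+m) - j = m.+1 by lia.
have e2 : (j.+1+m) - j.+1 = m by lia.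
rewrite e1 e2.
have h := mul_bin_left (j.+1+m) j. rewrite e1 in h.
have c := cen m.
have c2 := cen j.
set C' := 'C(_, j.+1) in h *. set a' := 'C(m.+1.*2, _) in c *.
set b' := 'C(j.+1.*2, _) in c2 *.
rewrite -(mulnn m.+1) -(mulnn j.+1).
have -> : m.*2.+1 * (j.+1 * j.+1) * (C' * b' * 'C(m.*2, m)) = (m.*2.+1 * 'C(m.*2, m)) * (j.+1 * C') * (b' * j.+1) by ring.
rewrite h c2.
have -> : m.+1 * m.+1 * j.*2.+1 * ('C(j.+1 + m, j) * 'C(j.*2, j) * a') = m.+1 * j.*2.+1 * 'C(j.+1 + m, j) * 'C(j.*2, j) * (a' * m.+1) by ring.
rewrite c; ring.
Qed.

Local Open Scope ring_scope.

Definition Fq (n k : nat) : rat := (Fn n k)%:R.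

Lemma odd_nz (a b : nat) : (2 * a%:R - 2 * b%:R - 1 : rat) != 0.
Proof.
apply/eqP => h.
have : ((2 * a)%N%:R : rat) == (1 + 2 * b)%N%:R.
  rewrite natrD !natrM; apply/eqP; move: h; lra.
rewrite eqr_nat => /eqP; lia.
Qed.

Lemma pos_nz (a : nat) : (a%:R + 1 : rat) != 0.
Proof. by rewrite natr1 pnatr_eq0. Qed.

Lemma pos2_nz (a : nat) : (2 * a%:R + 1 : rat) != 0.
Proof. by rewrite -natrM natr1 pnatr_eq0. Qed.

Lemma Q1 k m : Fq (k+m).+1 k = 2*((k+m)%:R+1)*(2* m%:R+1) / (m%:R+1)^+2 * Fq (k+m) k.
Proof.
have nz : (m%:R + 1 : rat)^+2 != 0 by rewrite expf_neq0 // pos_nz.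
have h : (m%:R+1)^+2 * Fq (k+m).+1 k = 2*((k+m)%:R+1)*(2* m%:R+1) * Fq (k+m) k.
  have := congr1 (fun x : nat => (x%:R : rat)) (R1 k m).
  rewrite /= natrM natrX (natrM _ _ (Fn (k+m) k)) natrM natrM -mul2n.
  by rewrite -(natr1 m) -(natr1 (k+m)) -(natr1 (2 * m)%N) natrM.
apply: (mulfI nz); rewrite h; field.
by rewrite pos_nz.
Qed.

Lemma Q2 k m : (0 < k+m)%N -> Fq (k+m).-1 k = m%:R^+2 / (2*(k%:R+m%:R)*(2* m%:R-1)) * Fq (k+m) k.
Proof.
case: m => [|m] hkm.
  rewrite /Fq /Fn addn0 bin_small; last lia.
  by rewrite !mul0n mulr0n expr0n /= !mul0r.
rewrite addnS /= Q1 -(natr1 m) natrD.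
have := odd_nz m.+1 0; rewrite -(natr1 m) mulr0 subr0 => h.
have hk : (k%:R + (m%:R + 1) : rat) != 0.
  by rewrite (natr1 m) -natrD pnatr_eq0 addnS.
field.
rewrite pos_nz h hk //.
Qed.

Lemma Q3 j m : Fq (j.+1+m) j = (2 * m%:R+1)*(j%:R+1)^+2/((m%:R+1)^+2*(2 * j%:R+1)) * Fq (j.+1+m) j.+1.
Proof.
move: (R3 j m); rewrite /Fq; move: (Fn _ j.+1) (Fn _ j) => A B.
rewrite -!mul2n => /(congr1 (fun x : nat => (x%:R : rat))).
rewrite /= !natrM ?natrX -(natr1 m) -(natr1 j) -(natr1 (2 * m)%N) -(natr1 (2 * j)%N) !natrM => h.
have nz : ((m%:R + 1)^+2 * (2 * j%:R + 1) : rat) != 0.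
  by rewrite mulf_neq0 ?expf_neq0 ?pos_nz ?pos2_nz.
have h' : (m%:R+1)^+2 * (2 * j%:R+1) * B%:R = (2 * m%:R+1)*(j%:R+1)^+2 * A%:R :> rat.
  by move: h; lra.
apply: (mulfI nz).
rewrite h'; field.
by rewrite pos_nz pos2_nz.
Qed.

Definition G (n k : nat) : rat :=
  if k is j.+1 then - 2 * (2 * j%:R + 1) * (2 * n%:R ^+ 2 - 2 * n%:R * j%:R - n%:R - 1) * Fq n j
                    / (2 * n%:R - 2 * j%:R - 1) else 0.
Definition T (n k : nat) : rat :=
  (n%:R + 1) ^+ 2 * Fq n.+1 k - 4 * (3 * n%:R ^+ 2 + 3 * n%:R + 1) * Fq n k
  + 32 * n%:R ^+ 2 * Fq n.-1 k.

Lemma odd_nz1 (a : nat) : (2 * a%:R - 1 : rat) != 0.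
Proof. by have := odd_nz a 0; rewrite mulr0 subr0. Qed.

Lemma key k m : (0 < k+m)%N -> T (k+m) k = G (k+m) k.+1 - G (k+m) k.
Proof.
move=> hkm; rewrite /T Q1 Q2 //=.
have hn : ((k + m)%:R : rat) != 0 by rewrite pnatr_eq0 -lt0n.
have hd := odd_nz (k+m) k.
case: k hkm hn hd => [|j] hkm hn hd.
  rewrite add0n in hn hd *.
  rewrite (_ : G m 0 = 0) // !mulr0n. field.
  by rewrite odd_nz1 hn pos_nz.
rewrite [G _ j.+1]/= Q3.
rewrite natrD -(natr1 j) in hn hd *.
field.
have -> : (2 * (j%:R + 1 + m%:R) - 2 * j%:R - 1 : rat) = 2 * m%:R + 1 by ring.
by rewrite ?hd ?hn ?pos_nz ?pos2_nz.
Qed.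

Lemma Fq_small n k : (n < k)%N -> Fq n k = 0.
Proof. by move=> h; rewrite /Fq /Fn bin_small // !mul0n. Qed.

Lemma Fq_diag n : Fq n n = 'C(n.*2, n)%:R.
Proof. by rewrite /Fq /Fn subnn binn mul1n muln1. Qed.

Lemma keyend n : T n n.+1 = G n n.+2 - G n n.+1.
Proof.
rewrite /T /= (@Fq_small n n.+1 (ltnSn n)) (@Fq_small n.-1 n.+1); last by case: n.
rewrite !Fq_diag.
move: (cen n); move: ('C(n.+1.*2, n.+1)) ('C(n.*2, n)) => a b.
rewrite -mul2n => /(congr1 (fun x : nat => (x%:R : rat))).
rewrite /= !natrM -(natr1 n) -(natr1 (2 * n)%N) natrM.
move: (a%:R : rat) (b%:R : rat) => A B h.
have hA : A = 2 * (2 * n%:R + 1) / (n%:R + 1) * B.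
  apply: (mulIf (pos_nz n)); rewrite h; field; exact: pos_nz.
rewrite hA; field.
have := odd_nz n n.+1; rewrite -(natr1 n) => h2. by rewrite odd_nz h2 pos_nz.
Qed.

Lemma telesc n : (0 < n)%N -> \sum_(0 <= k < n.+2) T n k = 0.
Proof.
move=> hn.
have -> : \sum_(0 <= k < n.+2) T n k = \sum_(0 <= k < n.+2) (G n k.+1 - G n k).
  apply: eq_big_nat => k /andP [_ hk].
  case: (ltngtP k n.+1) => [hk'|hk'|->]; last exact: keyend.
    2: by lia.
  have := key k (n - k); rewrite subnKC; last by lia.
  by apply; lia.
rewrite (@telescope_sumr _ 0 n.+2 (G n)) // /G Fq_small //.
by rewrite mulr0 mul0r subr0.
Qed.

Lemma rec_rat p : ((p.+1%:R + 1) ^+ 2 * (S p.+2)%:R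
   - 4 * (3 * p.+1%:R ^+ 2 + 3 * p.+1%:R + 1) * (S p.+1)%:R
   + 32 * p.+1%:R ^+ 2 * (S p)%:R : rat) = 0.
Proof.
have := @telesc p.+1 (ltn0Sn p).
rewrite /T !big_split /= sumrN -!mulr_sumr.
have e1 : \sum_(0 <= k < p.+3) Fq p.+2 k = (S p.+2)%:R by rewrite /S natr_sum.
have e2 : \sum_(0 <= k < p.+3) Fq p.+1 k = (S p.+1)%:R.
  by rewrite big_nat_recr //= Fq_small // addr0 /S natr_sum.
have e3 : \sum_(0 <= k < p.+3) Fq p k = (S p)%:R.
  by rewrite big_nat_recr //= big_nat_recr //= !Fq_small // !addr0 /S natr_sum.
by rewrite e1 e2 e3.
Qed.

Lemma rec_nat p : ((p.+2)^2 * S p.+2 + 32 * (p.+1)^2 * S p = 4 * (3 * (p.+1)^2 + 3 * p.+1 + 1) * S p.+1)%N.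
Proof.
have h := rec_rat p.
move: h; move: (S p.+2) (S p.+1) (S p) => a b c; move: p.+1 => q h.
have h' : (q%:R + 1) ^+ 2 * a%:R + 32 * q%:R ^+ 2 * c%:R
          = 4 * (3 * q%:R ^+ 2 + 3 * q%:R + 1) * b%:R :> rat.
  by move: h; lra.
move: h'; rewrite (natr1 q) -!natrX -!natrM -!natrD natr1 -!natrM.
by move/eqP; rewrite eqr_nat addn1 => /eqP.
Qed.

Local Open Scope nat_scope.

Lemma mod_cancel a d x y : coprime d a -> a * x = a * y %[mod d] -> x = y %[mod d].
Proof.
move=> co.
wlog le : x y / y <= x.
  move=> W h; case: (leqP y x) => [le|lt]; first exact: W.
  by apply/esym/W; [exact: ltnW | exact/esym].
move=> /eqP; rewrite eqn_mod_dvd ?leq_mul2l ?le ?orbT // -mulnBr Gauss_dvdr // => hd.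
by apply/eqP; rewrite eqn_mod_dvd.
Qed.

Theorem lemma3p1 (m n : nat) (hm : 0 < m) (hn : 0 < n) :
  S (m * n).+1 = 4 * (m * n).+1 * S (m * n) %[mod (m * n) ^ 2].
Proof.
have : 0 < m * n by rewrite muln_gt0 hm hn.
move: (m * n) => N; case: N => [//|p] _.
have E := rec_nat p.
move: E; move: (S p.+2) (S p.+1) (S p) => X Y Z E.
apply: (@mod_cancel (p.+1).*2.+1).
  rewrite coprimeXl // -coprime_modr (_ : (p.+1).*2.+1 = 2 * p.+1 + 1); last by lia.
  by rewrite modnMDl coprime_modr coprimen1.
have E2 : (X + 32 * Z) * p.+1 ^ 2 + (p.+1).*2.+1 * X
        = (4 * Y) * p.+1 ^ 2 + (p.+1).*2.+1 * (4 * p.+2 * Y) by nia.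
have := congr1 (modn^~ (p.+1 ^ 2)) E2.
by rewrite /= !modnMDl.
Qed.
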